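(* For every $n\ge 1$, the optimal value $E(n)$ of the linear program $$\text{minimize } \sum_{u\in\mathbb{F}_2^n}x_u \quad\text{subject to}\quad 0\le x_u\le 1\ (u\in\mathbb{F}_2^n),\qquad x_v+\sum_{\substack{u\in\mathbb{F}_2^n,\ u\supset v\\ \mathrm{dist}(u,v)=1}}x_u\ \ge\ 1\ \ \text{for all } v\in\mathbb{F}_2^n,$$ is $$E(n)=(-1)^n\,n!\,\{R_n(2)-R_n(1)R_{n-1}(1)\},\qquad\text{where } R_n(x)=\sum_{k=0}^n\frac{(-x)^k}{k!}.$$
   Context: Subsets of an $n$-set are identified with their indicator vectors in $\mathbb{F}_2^n$; $u\supset v$ means the support of $u$ contains the support of $v$, and dist denotes Hamming distance. $R_n(x)$ is the degree-$n$ partial sum of the Taylor series of $e^{-x}$. *)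

(* Defs.v *)
(* Subsets of an n-set = elements of F_2^n via indicator vectors;
   we represent them as {set 'I_n}. *)
From mathcomp Require Import all_boot all_order all_algebra.
Set Implicit Arguments. Unset Strict Implicit. Unset Printing Implicit Defensive.
Import Order.TTheory GRing.Theory Num.Theory.
Local Open Scope ring_scope.

Definition hdist (n : nat) (u v : {set 'I_n}) : nat :=
  #|(u :\: v) :|: (v :\: u)|.

Definition lp_feasible (R : realFieldType) (n : nat) (x : {set 'I_n} -> R) : Prop :=
  (forall u, 0 <= x u <= 1) /\
  (forall v : {set 'I_n},
     1 <= x v + \sum_(u : {set 'I_n} | (v \subset u) && (hdist u v == 1%N)) x u).

Definition lp_objective (R : realFieldType) (n : nat) (x : {set 'I_n} -> R) : R :=
  \sum_(u : {set 'I_n}) x u.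

Definition Rtaylor (R : realFieldType) (n : nat) (x : R) : R :=
  \sum_(k < n.+1) (- x) ^+ k / (k`!)%:R.

Definition Evalue (R : realFieldType) (n : nat) : R :=
  (-1) ^+ n * (n`!)%:R * (Rtaylor n 2 - Rtaylor n 1 * Rtaylor n.-1 1).

(* Main.v *)
Require Import Defs.
From mathcomp Require Import all_boot all_order all_algebra.
From mathcomp Require Import ring lra.
Import Order.TTheory GRing.Theory Num.Theory.
Local Open Scope ring_scope.
Section Comb.
Variable n : nat.
Implicit Types u v : {set 'I_n}.

Lemma up_set v :
  [set u : {set 'I_n} | (v \subset u) && (hdist u v == 1%N)] = [set i |: v | i in ~: v].
Proof.
apply/setP => u; rewrite inE; apply/andP/imsetP.
- case=> svu; rewrite /hdist.
  have -> : v :\: u = set0 by apply/eqP; rewrite setD_eq0.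
  rewrite setU0 => /cards1P [i Hi].
  have : i \in u :\: v by rewrite Hi set11.
  rewrite inE => /andP [iv iu].
  exists i; first by rewrite inE.
  apply/setP => w; rewrite !inE.
  case wv: (w \in v); first by rewrite orbT (subsetP svu).
  rewrite orbF; apply/idP/eqP => [wu|->]; last by [].
  by apply/set1P; rewrite -Hi inE wv wu.
- case=> i; rewrite inE => iv ->; split; first exact: subsetUr.
  rewrite /hdist.
  have -> : v :\: (i |: v) = set0 by apply/eqP; rewrite setD_eq0 subsetUr.
  rewrite setU0.
  have -> : (i |: v) :\: v = [set i].
    apply/setP => w; rewrite !inE; case: eqP => [->|] /=; first by rewrite (negbTE iv).
    by case: (w \in v).
  by rewrite cards1.
Qed.

Lemma down_set u :
  [set v : {set 'I_n} | (v \subset u) && (hdist u v == 1%N)] = [set u :\ i | i in u].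
Proof.
apply/setP => v; rewrite inE; apply/andP/imsetP.
- case=> svu; rewrite /hdist.
  have -> : v :\: u = set0 by apply/eqP; rewrite setD_eq0.
  rewrite setU0 => /cards1P [i Hi].
  have : i \in u :\: v by rewrite Hi set11.
  rewrite inE => /andP [iv iu].
  exists i; first by [].
  apply/setP => w; rewrite !inE.
  case wu: (w \in u); last first.
    by rewrite andbF; apply/negbTE; apply: contraFN wu; apply: (subsetP svu).
  rewrite andbT; apply/idP/idP => [wv|wi].
    by apply: contraNneq iv => <-.
  apply: contraR wi => wv; by rewrite -in_set1 -Hi inE wv wu.
- case=> i iu ->; split; first exact: subD1set.
  rewrite /hdist.
  have -> : (u :\ i) :\: u = set0 by apply/eqP; rewrite setD_eq0 subD1set.
  rewrite setU0.
  have -> : u :\: (u :\ i) = [set i].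
    apply/setP => w; rewrite !inE; case: eqP => [->|]; first by rewrite iu.
    by case: (w \in u).
  by rewrite cards1.
Qed.
End Comb.
Section Sums.
Variable R : realFieldType.
Variable n : nat.
Implicit Types u v : {set 'I_n}.

Lemma sum_up v (F : {set 'I_n} -> R) :
  \sum_(u : {set 'I_n} | (v \subset u) && (hdist u v == 1%N)) F u = \sum_(i in ~: v) F (i |: v).
Proof.
rewrite (eq_bigl (fun u => u \in [set i |: v | i in ~: v])); last first.
  by move=> u; rewrite -up_set inE.
rewrite big_imset // => i j; rewrite !inE => iv jv /setP /(_ i).
rewrite !inE eqxx /= (negbTE iv) orbF => /esym /eqP //.
Qed.

Lemma sum_down u (F : {set 'I_n} -> R) :
  \sum_(v : {set 'I_n} | (v \subset u) && (hdist u v == 1%N)) F v = \sum_(i in u) F (u :\ i).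
Proof.
rewrite (eq_bigl (fun v => v \in [set u :\ i | i in u])); last first.
  by move=> v; rewrite -down_set inE.
rewrite big_imset // => i j iu ju /setP /(_ i).
rewrite !inE eqxx /= iu andbT; by case: eqP.
Qed.

Lemma sum_up_card v (f : nat -> R) :
  \sum_(u : {set 'I_n} | (v \subset u) && (hdist u v == 1%N)) f #|u| = (n - #|v|)%:R * f #|v|.+1.
Proof.
rewrite sum_up (eq_bigr (fun _ => f #|v|.+1)); last first.
  by move=> i; rewrite inE => iv; rewrite cardsU1 iv.
rewrite sumr_const mulr_natl; congr (_ *+ _).
have H : (#|v| + #|~: v| = n)%N by rewrite cardsC card_ord.
apply: (@addnI #|v|); rewrite H subnKC //.
by have := max_card v; rewrite card_ord.
Qed.

Lemma sum_down_card u (f : nat -> R) :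
  \sum_(v : {set 'I_n} | (v \subset u) && (hdist u v == 1%N)) f #|v| = #|u|%:R * f #|u|.-1.
Proof.
rewrite sum_down (eq_bigr (fun _ => f #|u|.-1)); last first.
  by move=> i iu; rewrite (cardsD1 i u) iu.
by rewrite sumr_const mulr_natl.
Qed.

Lemma sum_card (f : nat -> R) :
  \sum_(v : {set 'I_n}) f #|v| = \sum_(k < n.+1) 'C(n, k)%:R * f k.
Proof.
rewrite (partition_big (fun v : {set 'I_n} => (inord #|v| : 'I_n.+1)) xpredT) //=.
apply: eq_bigr => k _.
rewrite (eq_bigl (fun v => v \in [set v : {set 'I_n} | #|v| == k])); last first.
  move=> v; rewrite inE; have := max_card v; rewrite card_ord -ltnS => Hv.
  by rewrite -(inj_eq val_inj) /= inordK.
rewrite (eq_bigr (fun _ => f k)); last by move=> v; rewrite inE => /eqP ->.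
by rewrite sumr_const card_draws card_ord mulr_natl.
Qed.
End Sums.
Section Alg.
Variable R : realFieldType.

Lemma sgn2 k : (-1) ^+ k * (-1) ^+ k = 1 :> R.
Proof. by rewrite -exprD -signr_odd oddD addbb. Qed.

Lemma signB a b : (b <= a)%N -> (-1) ^+ (a - b) = (-1) ^+ a * (-1) ^+ b :> R.
Proof. by move=> h; rewrite -{2}(subnK h) exprD -mulrA sgn2 mulr1. Qed.

Lemma fact_neq0 k : (k`!)%:R != 0 :> R.
Proof. by rewrite pnatr_eq0 -lt0n fact_gt0. Qed.

Lemma nat_neq0 k : (k.+1)%:R != 0 :> R.
Proof. by rewrite pnatr_eq0. Qed.

Definition ee (k : nat) : R := (-1) ^+ k / (k`!)%:R.
Definition rr (k : nat) : R := Rtaylor k (1 : R).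

Lemma RtaylorS k (x : R) : Rtaylor k.+1 x = Rtaylor k x + (- x) ^+ k.+1 / ((k.+1)`!)%:R.
Proof. by rewrite /Rtaylor big_ord_recr. Qed.

Lemma rrS k : rr k.+1 = rr k + ee k.+1.
Proof. by rewrite /rr RtaylorS. Qed.

Lemma rr0 : rr 0 = 1.
Proof. by rewrite /rr /Rtaylor big_ord1 expr0 fact0 divr1. Qed.

Lemma ee0 : ee 0 = 1.
Proof. by rewrite /ee expr0 fact0 divr1. Qed.

Lemma ee_mul m (j : 'I_m.+1) :
  ee j * ee (m - j)%N = ((-1) ^+ (m - j)%N * (-1) ^+ j *+ 'C(m, j)) / (m`!)%:R.
Proof.
have hj : (j <= m)%N by rewrite -ltnS.
have hb := bin_fact hj.
rewrite /ee -mulr_natr -hb !natrM.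
have := fact_neq0 j; have := fact_neq0 (m - j)%N; have : ('C(m, j))%:R != 0 :> R.
  by rewrite pnatr_eq0 -lt0n bin_gt0.
move=> h1 h2 h3; field.
by rewrite h1 h2 h3.
Qed.

Lemma conv m : \sum_(j < m.+1) ee j * ee (m - j)%N = (-2) ^+ m / (m`!)%:R.
Proof.
rewrite (eq_bigr _ (fun j _ => ee_mul m j)) -mulr_suml.
congr (_ / _); rewrite -exprDn.
congr (_ ^+ _); rewrite -opprD; congr (- _).
Qed.

Lemma Tlem n : \sum_(j < n.+1) ee j * rr (n - j)%N = Rtaylor n 2.
Proof.
elim: n => [|n IH].
  by rewrite big_ord1 ee0 rr0 mulr1 /Rtaylor big_ord1 expr0 fact0 divr1.
rewrite big_ord_recr /= subnn rr0 mulr1 RtaylorS -IH.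
rewrite (eq_bigr (fun j : 'I_n.+1 => ee j * rr (n - j)%N + ee j * ee (n.+1 - j)%N)); last first.
  move=> j _; have hj : (j <= n)%N by rewrite -ltnS.
  by rewrite subSn // rrS mulrDr.
rewrite big_split /= -addrA; congr (_ + _).
have := conv n.+1; rewrite big_ord_recr /= subnn ee0 mulr1 => ->.
by [].
Qed.

Lemma rev_sum n (g : nat -> R) :
  \sum_(k < n.+1) (-1) ^+ k / ((n - k)%N`!)%:R * g k =
  (-1) ^+ n * \sum_(j < n.+1) ee j * g (n - j)%N.
Proof.
rewrite (reindex_inj rev_ord_inj) /= mulr_sumr; apply: eq_bigr => j _.
have hj : (j <= n)%N by rewrite -ltnS.
rewrite subKn // /ee.
rewrite signB //.
by rewrite subSS !exprS; ring.
Qed.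

Definition aa (m k : nat) : R := (-1) ^+ k * (k`!)%:R * (rr k - rr m).

Lemma aaS m k : aa m k.+1 + (k.+1)%:R * aa m k = 1.
Proof.
rewrite /aa rrS /ee factS natrM exprS.
have := fact_neq0 k; have := nat_neq0 k => h1 h2.
rewrite -[X in _ = X](sgn2 k).
field. by rewrite h2 addrC natr1 h1.
Qed.

Lemma aam m : aa m m = 0.
Proof. by rewrite /aa subrr mulr0. Qed.

Lemma aa_top m : aa m m.+1 = 1.
Proof. by have := aaS m m; rewrite aam mulr0 addr0. Qed.

Lemma aa_rec m k : aa m k = (1 - aa m k.+1) / (k.+1)%:R.
Proof.
have h := nat_neq0 k.
have -> : 1 - aa m k.+1 = k.+1%:R * aa m k by apply/eqP; rewrite subr_eq addrC aaS.
by rewrite mulrC mulKf.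
Qed.

Lemma aa_bnd' m i : (i <= m)%N -> 0 <= aa m (m - i) <= 1.
Proof.
elim: i => [|i IH] hi; first by rewrite subn0 aam lexx ler01.
rewrite aa_rec subnSK //.
have /andP [b0 b1] := IH (ltnW hi).
set b := aa m (m - i); set d := (m - i)%:R : R.
have hd : 1 <= d by rewrite /d ler1n subn_gt0.
have hd0 : 0 < d by apply: lt_le_trans hd; exact: ltr01.
apply/andP; split.
  by apply: divr_ge0; [rewrite subr_ge0 | exact: ltW].
rewrite ler_pdivrMr // mul1r; apply: le_trans _ hd; rewrite gerBl; exact: b0.
Qed.

Lemma aa_bnd m k : (k <= m.+1)%N -> 0 <= aa m k <= 1.
Proof.
rewrite leq_eqVlt => /orP [/eqP ->|]; first by rewrite aa_top ler01 lexx.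
rewrite ltnS => hk.
have -> : k = (m - (m - k))%N by rewrite subKn.
apply: aa_bnd'; exact: leq_subr.
Qed.
End Alg.
Section Dual.
Variable R : realFieldType.

Lemma sum_ee n : \sum_(j < n.+1) ee R j = rr R n.
Proof. by []. Qed.

Lemma dual_val m : \sum_(k < m.+2) 'C(m.+1, k)%:R * aa R m k = Evalue R m.+1.
Proof.
rewrite (eq_bigr (fun k : 'I_m.+2 => (m.+1)`!%:R *
   ((-1) ^+ k / ((m.+1 - k)%N`!)%:R * (rr R k - rr R m)))); last first.
  move=> k _; have hk : (k <= m.+1)%N by rewrite -ltnS.
  have hb := bin_fact hk.
  rewrite /aa -hb !natrM.
  have := fact_neq0 R (m.+1 - k)%N => h.
  field; exact: h.
rewrite -mulr_sumr (@rev_sum R m.+1 (fun k => rr R k - rr R m)).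
rewrite (eq_bigr (fun j : 'I_m.+2 => ee R j * rr R (m.+1 - j)%N - rr R m * ee R j)); last first.
  by move=> j _; rewrite mulrBr [_ * rr R m]mulrC.
rewrite sumrB -mulr_sumr sum_ee Tlem /Evalue /=.
rewrite /rr; ring.
Qed.
End Dual.
Section Main.
Variable R : realFieldType.

Lemma exch n (x : {set 'I_n} -> R) (f : nat -> R) :
  \sum_(v : {set 'I_n}) f #|v| *
     (x v + \sum_(u : {set 'I_n} | (v \subset u) && (hdist u v == 1%N)) x u) =
  \sum_(u : {set 'I_n}) x u * (f #|u| + #|u|%:R * f #|u|.-1).
Proof.
rewrite (eq_bigr (fun v : {set 'I_n} => f #|v| * x v +
   \sum_(u : {set 'I_n}) (if (v \subset u) && (hdist u v == 1%N) then f #|v| * x u else 0)));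
  last by move=> v _; rewrite mulrDr mulr_sumr big_mkcond.
rewrite big_split /= exchange_big /=.
under [X in _ + X = _]eq_bigr => u _ do rewrite -big_mkcond /= -mulr_suml sum_down_card.
rewrite -big_split /=; apply: eq_bigr => u _; rewrite mulrDr; by rewrite mulrC [x u * (_ * _)]mulrC.
Qed.

Fixpoint yy (n k : nat) : R :=
  match k with
  | 0 => 0
  | k'.+1 => match k' with
             | 0 => 1 / n%:R
             | _ => (1 - yy n k') / (n - k')%:R
             end
  end.

Lemma yyS n k : yy n k.+2 = (1 - yy n k.+1) / (n - k.+1)%:R.
Proof. by []. Qed.

Lemma yy_bnd m k : (k <= m)%N -> 0 <= yy m.+1 k <= 1.
Proof.
elim: k => [|k IH] hk; first by rewrite /= lexx ler01.
case: k IH hk => [|k] IH hk.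
  rewrite /= mul1r invr_ge0 ler0n /=.
  by rewrite invf_le1 ?ler1n ?ltr0n.
have /andP [b0 b1] := IH (ltnW hk).
rewrite yyS.
set b := yy m.+1 k.+1 in b0 b1 *.
have hd : 1 <= (m.+1 - k.+1)%:R :> R by rewrite ler1n subn_gt0 ltnS ltnW.
have hd0 : 0 < (m.+1 - k.+1)%:R :> R by apply: lt_le_trans hd; exact: ltr01.
apply/andP; split.
  by apply: divr_ge0; [rewrite subr_ge0 | exact: ltW].
rewrite ler_pdivrMr // mul1r; apply: le_trans _ hd; rewrite gerBl; exact: b0.
Qed.

Lemma yy_rec m k : (k < m)%N -> yy m.+1 k + (m.+1 - k)%:R * yy m.+1 k.+1 = 1.
Proof.
case: k => [|k] hk.
  by rewrite /= add0r subn0 mul1r mulfV // pnatr_eq0.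
rewrite yyS.
have hd : (m.+1 - k.+1)%:R != 0 :> R by rewrite pnatr_eq0 -lt0n subn_gt0 ltnS ltnW.
by rewrite mulrC mulfVK // addrC subrK.
Qed.
End Main.
Section Final.
Variable R : realFieldType.
Variable m : nat.

Definition xf (k : nat) : R := if k == m.+1 then 1 else yy R m.+1 k.

Lemma xf_bnd k : (k <= m.+1)%N -> 0 <= xf k <= 1.
Proof.
rewrite /xf; case: eqP => [_|ne]; first by rewrite ler01 lexx.
rewrite leq_eqVlt => /orP [/eqP //|]; rewrite ltnS; exact: yy_bnd.
Qed.

Lemma L_eq k : (k <= m.+1)%N -> k != m -> xf k + (m.+1 - k)%:R * xf k.+1 = 1.
Proof.
rewrite leq_eqVlt => /orP [/eqP ->|]; first by rewrite subnn mul0r addr0 /xf eqxx.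
rewrite ltnS leq_eqVlt => /orP [/eqP -> |hk]; first by rewrite eqxx.
move=> _; rewrite /xf.
have -> : (k == m.+1) = false by apply/negbTE; rewrite neq_ltn ltnS ltnW.
have -> : (k.+1 == m.+1) = false by apply/negbTE; rewrite neq_ltn ltnS hk.
exact: yy_rec.
Qed.

Lemma L_m : 1 <= xf m + (m.+1 - m)%:R * xf m.+1.
Proof.
rewrite subSnn mul1r {2}/xf eqxx lerDr.
by case/andP: (@xf_bnd m (leqnSn m)).
Qed.

Lemma card_le (u : {set 'I_m.+1}) : (#|u| <= m.+1)%N.
Proof. by have := max_card u; rewrite card_ord. Qed.

Lemma c_le k : (k <= m.+1)%N -> aa R m k + k%:R * aa R m k.-1 <= 1.
Proof.
case: k => [|k] hk; first by rewrite mul0r addr0; case/andP: (@aa_bnd R m _ hk).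
by rewrite /= aaS.
Qed.

End Final.

Theorem theorem2 (R : realFieldType) (n : nat) (hn : (1 <= n)%N) :
  (exists x : {set 'I_n} -> R, lp_feasible x /\ lp_objective x = Evalue R n) /\
  (forall x : {set 'I_n} -> R, lp_feasible x -> Evalue R n <= lp_objective x).
Proof.
case: n hn => [//|m] _.
split.
  exists (fun u : {set 'I_m.+1} => xf R m #|u|); split.
    split; first by move=> u; apply: xf_bnd; exact: card_le.
    move=> v; rewrite sum_up_card.
    have hv := @card_le m v.
    case: (eqVneq #|v| m) => [->|ne]; first exact: L_m.
    by rewrite L_eq.
  rewrite /lp_objective -dual_val -(@sum_card R m.+1 (fun k => aa R m k)).
  transitivity (\sum_(u : {set 'I_m.+1}) xf R m #|u| * (aa R m #|u| + #|u|%:R * aa R m #|u|.-1)).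
    apply: eq_bigr => u _.
    case E: #|u| => [|k].
      by rewrite /xf /= mul0r.
    by rewrite /= aaS mulr1.
  rewrite -exch; apply: eq_bigr => v _; rewrite sum_up_card.
  case: (eqVneq #|v| m) => [->|ne]; first by rewrite aam !mul0r.
  by rewrite L_eq ?mulr1 // card_le.
move=> x [x01 cov].
rewrite /lp_objective -dual_val -(@sum_card R m.+1 (fun k => aa R m k)).
apply: (le_trans (y := \sum_(v : {set 'I_m.+1}) aa R m #|v| *
   (x v + \sum_(u : {set 'I_m.+1} | (v \subset u) && (hdist u v == 1%N)) x u))).
  apply: ler_sum => v _.
  have /andP [a0 _] := @aa_bnd R m _ (@card_le m v).
  have := cov v; set L := (x v + _) => hL.
  rewrite -{1}(mulr1 (aa R m #|v|)); exact: ler_wpM2l.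
rewrite exch; apply: ler_sum => u _.
have /andP [x0 _] := x01 u.
rewrite -{2}(mulr1 (x u)); apply: ler_wpM2l => //.
exact: c_le (@card_le m u).
Qed.
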